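(* Let $\mathbb{Z}_{\ge 0}$ be the commutative monoid of nonnegative integers under addition. Then the simplicial set $K(\mathbb{Z}_{\ge 0},2)$ is a Skvortsov–Shehtman complex but is not a Kan complex.
   Context: For a commutative monoid $M$ (written multiplicatively), $K(M,2)$ is the simplicial set whose $n$-simplices are families $(a_{ijk})_{0\le i<j<k\le n}$ of elements of $M$ satisfying $a_{ikl}a_{ijk}=a_{ijl}a_{jkl}$ for all $0\le i<j<k<l\le n$; the $j$-th face map omits all entries involving the index $j$ (and reindexes), and the $j$-th degeneracy map repeats the index $j$, inserting the unit of $M$ at the new entries (it is the Duskin nerve of the one-object, one-1-morphism 2-category whose 2-morphisms are the elements of $M$). For $M=\mathbb{Z}_{\ge0}$ the monoid operation is addition, so the relations read $a_{ikl}+a_{ijk}=a_{ijl}+a_{jkl}$. A simplicial set $S$ is a Skvortsov–Shehtman complex (SS-complex) if it satisfies all Beck–Chevalley conditions $\mathrm{BC}_{p,q}[n]$: for all $n>1$ and all $0\le p<q\le n$, for any $(n-1)$-simplices $c_p,c_q$ of $S$ with $d_pc_q=d_{q-1}c_p$ there exists an $n$-simplex $x$ of $S$ with $d_px=c_p$ and $d_qx=c_q$. A Kan complex is a simplicial set satisfying the Kan horn-filling conditions for all $n>0$, $0\le p\le n$. *)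

(* Defs.v *)
From mathcomp Require Import all_boot zify.
Set Implicit Arguments. Unset Strict Implicit. Unset Printing Implicit Defensive.

(* [simp S n] is the type of n-simplices; [face S n j] is d_j from     *)
(* (n+1)-simplices to n-simplices, j = 0..n+1.  Degeneracies play no   *)
(* role in the Beck-Chevalley or Kan conditions and are omitted.       *)
Record sset := SSet {
  simp : nat -> Type;
  face : forall n : nat, 'I_n.+2 -> simp n.+1 -> simp n
}.

(* Beck-Chevalley condition BC_{p,q}[n] for n = m+2 > 1, 0 <= p < q <= n:
   c_p, c_q are (n-1)-simplices with d_p c_q = d_{q-1} c_p. *)
Definition BC (S : sset) (m p q : nat) : Prop :=
  forall cp cq : simp S m.+1,
    face (inord p) cq = face (inord q.-1) cp ->
    exists x : simp S m.+2, face (inord p) x = cp /\ face (inord q) x = cq.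

Definition SS_complex (S : sset) : Prop :=
  forall m p q : nat, p < q -> q <= m.+2 -> BC S m p q.

(* A (n,p)-horn is a family
   (y_i)_{i <> p} of (n-1)-simplices with d_i y_j = d_{j-1} y_i for i < j
   (both different from p); a filler is an n-simplex x with d_i x = y_i
   for all i <> p.  Case n = 1 (no compatibility) and n = m+2 are separated
   because 0-simplices have no faces. *)
Definition Kan_complex (S : sset) : Prop :=
  (forall (p : 'I_2) (y : 'I_2 -> simp S 0),
      exists x : simp S 1, forall i : 'I_2, i != p -> face i x = y i) /\
  (forall (m : nat) (p : 'I_m.+3) (y : 'I_m.+3 -> simp S m.+1),
      (forall i j : 'I_m.+3, i < j -> i != p -> j != p ->
          face (inord i) (y j) = face (inord j.-1) (y i)) ->
      exists x : simp S m.+2, forall i : 'I_m.+3, i != p -> face i x = y i).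

(* K(M,2) for a commutative monoid (M, op, idx).  An n-simplex is a    *)
(* family a_{ijk}, 0 <= i < j < k <= n, satisfying                     *)
(*   a_{ikl} a_{ijk} = a_{ijl} a_{jkl}.                                *)
(* It is stored as a function on triples of vertices whose entries     *)
(* outside i<j<k are normalized to the unit (so equality of simplices  *)
(* is equality of the families).                                       *)
Section KM2.
Variables (M : Type) (idx : M) (op : Monoid.com_law idx).

Record KM2_simplex (n : nat) := KM2S {
  kval : 'I_n.+1 -> 'I_n.+1 -> 'I_n.+1 -> M;
  kjunk : forall i j k : 'I_n.+1, ~~ ((i < j) && (j < k)) -> kval i j k = idx;
  kcoc : forall i j k l : 'I_n.+1, i < j -> j < k -> k < l ->
     op (kval i k l) (kval i j k) = op (kval i j l) (kval j k l)
}.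

Lemma lift_ltn n (h : 'I_n.+1) (i j : 'I_n) : (lift h i < lift h j) = (i < j).
Proof.
rewrite /lift /= /bump.
case: (leqP h i) => Hi; case: (leqP h j) => Hj /=;
  apply/idP/idP => H; lia.
Qed.

Definition KM2_face n (j : 'I_n.+2) (a : KM2_simplex n.+1) : KM2_simplex n.
Proof.
refine (@KM2S n (fun i k l => kval a (lift j i) (lift j k) (lift j l)) _ _).
- by move=> i k l H; apply: kjunk; rewrite !lift_ltn.
- by move=> i k l r H1 H2 H3; apply: kcoc; rewrite lift_ltn.
Defined.

Definition KM2 : sset := @SSet KM2_simplex KM2_face.
End KM2.

Definition K_nat_2 : sset := @KM2 nat 0 addn.

(* Main.v *)
Require Import Defs.
From mathcomp Require Import all_boot.
From mathcomp Require Import zify.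
From Stdlib Require Import FunctionalExtensionality ProofIrrelevance.
Set Implicit Arguments. Unset Strict Implicit. Unset Printing Implicit Defensive.

Definition av N (a : KM2_simplex addn N) (i j k : nat) : nat :=
  if [&& i <= N, j <= N & k <= N] then kval a (inord i) (inord j) (inord k) else 0.

Lemma kvalE N (a : KM2_simplex addn N) (i j k : 'I_N.+1) : kval a i j k = av a i j k.
Proof.
by rewrite /av !leq_ord /= !inord_val.
Qed.

Lemma av_junk N (a : KM2_simplex addn N) i j k :
  ~~ [&& i < j, j < k & k <= N] -> av a i j k = 0.
Proof.
rewrite /av; case: ifP => // /and3P[hi hj hk] H; apply: kjunk.
rewrite !inordK //; move: H; rewrite hk; lia.
Qed.

Lemma av_coc N (a : KM2_simplex addn N) i j k l :
  i < j -> j < k -> k < l -> l <= N ->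
  av a i k l + av a i j k = av a i j l + av a j k l.
Proof.
move=> h1 h2 h3 h4; rewrite /av.
have -> : [&& i <= N, k <= N & l <= N] by apply/and3P; split; lia.
have -> : [&& i <= N, j <= N & k <= N] by apply/and3P; split; lia.
have -> : [&& i <= N, j <= N & l <= N] by apply/and3P; split; lia.
have -> : [&& j <= N, k <= N & l <= N] by apply/and3P; split; lia.
apply: (kcoc a); rewrite !inordK //; lia.
Qed.

Lemma bump_le (h x N : nat) : h <= N.+1 -> (bump h x <= N.+1) = (x <= N).
Proof. rewrite /bump; case: leqP => H1 H2; apply/idP/idP; lia. Qed.

Lemma av_face N (h : 'I_N.+2) (a : KM2_simplex addn N.+1) i j k :
  av (KM2_face h a) i j k = av a (bump h i) (bump h j) (bump h k).
Proof.
have hh : h <= N.+1 by rewrite -ltnS ltn_ord.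
rewrite /av !bump_le //.
case: ifP => // /and3P[hi hj hk] /=.
have E : forall x, x <= N -> lift h (inord x) = inord (bump h x) :> 'I_N.+2.
  move=> x hx; apply: val_inj; rewrite /= inordK // inordK //.
  by rewrite ltnS bump_le.
by rewrite !E.
Qed.

Definition mkS N (f : nat -> nat -> nat -> nat)
  (Hj : forall i j k, ~~ [&& i < j, j < k & k <= N] -> f i j k = 0)
  (Hc : forall i j k l, i < j -> j < k -> k < l -> l <= N ->
          f i k l + f i j k = f i j l + f j k l) : KM2_simplex addn N.
Proof.
refine (@KM2S _ _ addn N (fun i j k => f i j k) _ _).
- move=> i j k H; apply: Hj; move: H; rewrite leq_ord; lia.
- move=> i j k l h1 h2 h3; apply: Hc => //; by rewrite leq_ord.
Defined.

Lemma av_mk N f Hj Hc i j k : av (@mkS N f Hj Hc) i j k = f i j k.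
Proof.
rewrite /av /=; case: ifP => [/and3P[hi hj hk]|H]; first by rewrite !inordK.
rewrite Hj //; move: H; lia.
Qed.

Lemma S_ext N (a b : KM2_simplex addn N) :
  (forall i j k, av a i j k = av b i j k) -> a = b.
Proof.
move=> H.
have E : kval a = kval b.
  apply: functional_extensionality => i; apply: functional_extensionality => j.
  apply: functional_extensionality => k; by rewrite !kvalE.
case: a b E {H} => fa ja ca [fb jb cb] /= E; subst fb.
f_equal; apply: proof_irrelevance.
Qed.

Definition fy (v : nat) (a b c : nat) : nat :=
  if [&& a == 0, b == 1 & c == 2] then v else 0.

Lemma fy_junk v i j k : ~~ [&& i < j, j < k & k <= 2] -> fy v i j k = 0.
Proof. rewrite /fy; case: ifP => // /and3P[/eqP-> /eqP-> /eqP->]. by []. Qed.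

Lemma fy_coc v i j k l : i < j -> j < k -> k < l -> l <= 2 ->
  fy v i k l + fy v i j k = fy v i j l + fy v j k l.
Proof. lia. Qed.

Definition ysimp (v : nat) : KM2_simplex addn 2 := mkS (@fy_junk v) (@fy_coc v).

Lemma one_simp_eq (a b : KM2_simplex addn 1) : a = b.
Proof.
apply: S_ext => i j k; rewrite !av_junk //; lia.
Qed.

Theorem notKan : ~ Kan_complex K_nat_2.
Proof.
move=> [_ H].
have [x Hx] := H 1 (inord 1) (fun i : 'I_4 => ysimp (val i == 3)) 
   (fun i j _ _ _ => one_simp_eq _ _).
have ne : forall a, a < 4 -> a != 1 -> (inord a : 'I_4) != inord 1.
  move=> a ha h1; apply/eqP => /(f_equal val); rewrite /= !inordK //; lia.
have h0 := Hx (inord 0) (ne 0 isT isT).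
have h2 := Hx (inord 2) (ne 2 isT isT).
have h3 := Hx (inord 3) (ne 3 isT isT).
have e0 := f_equal (fun s => av s 0 1 2) h0.
have e2 := f_equal (fun s => av s 0 1 2) h2.
have e3 := f_equal (fun s => av s 0 1 2) h3.
move: e0 e2 e3 => /=; rewrite !av_face !av_mk /fy /=.
rewrite !inordK //= /bump /=.
have := av_coc x (i:=0) (j:=1) (k:=2) (l:=3) isT isT isT isT.
move=> h e0 e2 e3; move: e0 e2 e3; rewrite ?add0n ?add1n; lia.
Qed.

Ltac bcases := rewrite /bump /unbump;
  repeat (case: leqP => ? /=); repeat (case: ltnP => ? /=); lia.

Lemma bump_ltn h i j : (bump h i < bump h j) = (i < j).
Proof. apply/idP/idP; bcases. Qed.

Lemma bump_ord3 h n i j k : h <= n.+1 ->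
  [&& bump h i < bump h j, bump h j < bump h k & bump h k <= n.+1] =
  [&& i < j, j < k & k <= n].
Proof. by move=> hh; rewrite !bump_ltn bump_le. Qed.

Lemma bump_neq h x : bump h x != h.
Proof. by rewrite eq_sym neq_bump. Qed.

Lemma bump_q_neq_p p q x : p < q -> (bump q x != p) = (x != p).
Proof. move=> H; apply/idP/idP; bcases. Qed.

Lemma unbump_bump_comm p q x : p < q -> x != p ->
  unbump p (bump q x) = bump q.-1 (unbump p x).
Proof. move=> H1 H2; bcases. Qed.

Definition Xb (n p q : nat) (F G : nat -> nat -> nat -> nat) (b : nat -> nat)
   (i j k : nat) : nat :=
  if [&& i < j, j < k & k <= n.+1] then
    if [&& i != p, j != p & k != p] then F (unbump p i) (unbump p j) (unbump p k)
    else if [&& i != q, j != q & k != q] then G (unbump q i) (unbump q j) (unbump q k)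
    else b (i + j + k - p - q)
  else 0.

Definition junk n (F : nat -> nat -> nat -> nat) :=
  forall i j k, ~~ [&& i < j, j < k & k <= n] -> F i j k = 0.
Definition coc n (F : nat -> nat -> nat -> nat) :=
  forall i j k l, i < j -> j < k -> k < l -> l <= n ->
     F i k l + F i j k = F i j l + F j k l.

Lemma X_face_p n p q F G b i j k : p <= n.+1 -> junk n F ->
  Xb n p q F G b (bump p i) (bump p j) (bump p k) = F i j k.
Proof.
move=> hp FJ; rewrite /Xb bump_ord3 //; case: ifP => H; last by rewrite FJ // H.
by rewrite !bump_neq /= !bumpK.
Qed.

Lemma X_face_q n p q F G b i j k : p < q -> q <= n.+1 -> junk n G ->
  (forall i j k, G (bump p i) (bump p j) (bump p k) =
                 F (bump q.-1 i) (bump q.-1 j) (bump q.-1 k)) ->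
  Xb n p q F G b (bump q i) (bump q j) (bump q k) = G i j k.
Proof.
move=> hpq hq GJ comp; rewrite /Xb bump_ord3 //; case: ifP => H; last by rewrite GJ // H.
rewrite !bump_neq /= !bumpK.
case: ifP => //; rewrite !bump_q_neq_p // => /and3P[hi hj hk].
rewrite !unbump_bump_comm // -comp !(unbumpK (h:=p)) //.
Qed.

Lemma coc_avoid n h f F : h <= n.+1 ->
  (forall i j k, f (bump h i) (bump h j) (bump h k) = F i j k) -> coc n F ->
  forall a b c d, a < b -> b < c -> c < d -> d <= n.+1 ->
    a != h -> b != h -> c != h -> d != h ->
    f a c d + f a b c = f a b d + f b c d.
Proof.
move=> hh Hf FC a b c d h1 h2 h3 h4 ha hb hc hd.
rewrite -(unbumpK (h:=h) (x:=a)) ?inE // -(unbumpK (h:=h) (x:=b)) ?inE //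
   -(unbumpK (h:=h) (x:=c)) ?inE // -(unbumpK (h:=h) (x:=d)) ?inE // !Hf.
apply: FC.
- by rewrite -(bump_ltn h) !(unbumpK (h:=h)) ?inE.
- by rewrite -(bump_ltn h) !(unbumpK (h:=h)) ?inE.
- by rewrite -(bump_ltn h) !(unbumpK (h:=h)) ?inE.
- by rewrite -(bump_le _ hh) (unbumpK (h:=h)) ?inE.
Qed.

From mathcomp Require Import all_algebra.
From mathcomp Require Import zify.
Import GRing.Theory Num.Theory.
Local Open Scope ring_scope.

Definition OA (h : nat -> nat -> nat -> int) (i j k : nat) : int :=
  if (i < j)%N && (j < k)%N then h i j k
  else if (i < k)%N && (k < j)%N then - h i k j
  else if (k < i)%N && (i < j)%N then h k i j
  else if (j < i)%N && (i < k)%N then - h j i k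
  else if (j < k)%N && (k < i)%N then h j k i
  else if (k < j)%N && (j < i)%N then - h k j i
  else 0.

Ltac oa_cases i j k :=
  rewrite /OA; case: (ltngtP i j) => ?; case: (ltngtP j k) => ?;
  case: (ltngtP i k) => ? //=; try lia.

Lemma OA_s12 h i j k : OA h i j k = - OA h j i k.
Proof. oa_cases i j k. Qed.
Lemma OA_s23 h i j k : OA h i j k = - OA h i k j.
Proof. oa_cases i j k. Qed.

Lemma OA_ijk h i j k : (i < j < k)%N -> OA h i j k = h i j k.
Proof. move=> /andP[]; oa_cases i j k. Qed.
Lemma OA_ikj h i j k : (i < k < j)%N -> OA h i j k = - h i k j.
Proof. move=> /andP[]; oa_cases i j k. Qed.
Lemma OA_kij h i j k : (k < i < j)%N -> OA h i j k = h k i j.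
Proof. move=> /andP[]; oa_cases i j k. Qed.
Lemma OA_jik h i j k : (j < i < k)%N -> OA h i j k = - h j i k.
Proof. move=> /andP[]; oa_cases i j k. Qed.
Lemma OA_jki h i j k : (j < k < i)%N -> OA h i j k = h j k i.
Proof. move=> /andP[]; oa_cases i j k. Qed.
Lemma OA_kji h i j k : (k < j < i)%N -> OA h i j k = - h k j i.
Proof. move=> /andP[]; oa_cases i j k. Qed.

Definition dOA h i j k l := OA h j k l - OA h i k l + OA h i j l - OA h i j k.

Lemma d12 h i j k l : dOA h i j k l = - dOA h j i k l.
Proof. rewrite /dOA (OA_s12 h j i l) (OA_s12 h j i k); lia. Qed.
Lemma d23 h i j k l : dOA h i j k l = - dOA h i k j l.
Proof. rewrite /dOA (OA_s12 h k j l) (OA_s23 h i k j); lia. Qed.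
Lemma d34 h i j k l : dOA h i j k l = - dOA h i j l k.
Proof. rewrite /dOA (OA_s23 h j l k) (OA_s23 h i l k) (OA_s23 h i j l); lia. Qed.

Lemma dOA_sorted h a b c d : (a < b)%N -> (b < c)%N -> (c < d)%N ->
  dOA h a b c d = h b c d - h a c d + h a b d - h a b c.
Proof.
move=> h1 h2 h3; rewrite /dOA !OA_ijk //; apply/andP; split => //; lia.
Qed.

Lemma dOA_all h (D : pred nat) :
  (forall a b c d, (a < b)%N -> (b < c)%N -> (c < d)%N ->
     D a -> D b -> D c -> D d -> dOA h a b c d = 0) ->
  forall i j k l, D i -> D j -> D k -> D l -> dOA h i j k l = 0.
Proof.
move=> H.
have L1 : forall i j k l, (j < k)%N -> (k < l)%N -> D i -> D j -> D k -> D l ->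
    dOA h i j k l = 0.
  move=> i j k l jk kl Di Dj Dk Dl.
  case: (ltngtP i j) => ij; first exact: H.
  - case: (ltngtP i k) => ik.
    + have := d12 h i j k l; have := H j i k l; lia.
    + case: (ltngtP i l) => il.
      * have := d12 h i j k l; have := d23 h j i k l; have := H j k i l; lia.
      * have := d12 h i j k l; have := d23 h j i k l; have := d34 h j k i l;
        have := H j k l i; lia.
      * subst; have := d12 h l j k l; have := d23 h j l k l; have := d34 h j k l l; lia.
    + subst; have := d12 h k j k l; have := d23 h j k k l; lia.
  - subst; have := d12 h j j k l; lia.
have L2 : forall i j k l, (k < l)%N -> D i -> D j -> D k -> D l -> dOA h i j k l = 0.
  move=> i j k l kl Di Dj Dk Dl.
  case: (ltngtP j k) => jk; first exact: L1.
  - case: (ltngtP j l) => jl.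
    + have := d23 h i j k l; have := L1 i k j l; lia.
    + have := d23 h i j k l; have := d34 h i k j l; have := L1 i k l j; lia.
    + subst; have := d23 h i l k l; have := d34 h i k l l; lia.
  - subst; have := d23 h i k k l; lia.
move=> i j k l Di Dj Dk Dl.
case: (ltngtP k l) => kl; first exact: L2.
- have := d34 h i j k l; have := L2 i j l k; lia.
- subst; have := d34 h i j l l; lia.
Qed.

Lemma T_exists (N : nat) (phi : nat -> int) (O I : pred nat) :
  (forall s, O s -> ~~ I s) ->
  (forall s r, (s <= N)%N -> (r <= N)%N -> O s -> I r -> phi r <= phi s) ->
  exists T : int, (forall s, (s <= N)%N -> O s -> 0 <= T + phi s) /\
                  (forall r, (r <= N)%N -> I r -> T + phi r <= 0).
Proof.
move=> HD; elim: N => [|N IH] H.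
  exists (- phi 0%N); split => [s|r]; rewrite leqn0 => /eqP -> _; lia.
have [T [HO HI]] : exists T : int, (forall s, (s <= N)%N -> O s -> 0 <= T + phi s) /\
                  (forall r, (r <= N)%N -> I r -> T + phi r <= 0).
  apply: IH => s r hs hr; apply: H; lia.
have [hT|hT] := boolP (T <= - phi N.+1).
- case: (boolP (O N.+1)) => ON.
    exists (- phi N.+1); split.
    + move=> s; rewrite leq_eqVlt ltnS => /orP[/eqP->|hs] Os; first lia.
      have := HO s hs Os; lia.
    + move=> r; rewrite leq_eqVlt ltnS => /orP[/eqP->|hr] Ir; first lia.
      have := H _ _ (leqnn _) (ltnW (hr : (r < N.+1)%N)) ON Ir; lia.
  exists T; split.
  + move=> s; rewrite leq_eqVlt ltnS => /orP[/eqP->|hs] Os; first by rewrite Os in ON.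
    exact: HO.
  + move=> r; rewrite leq_eqVlt ltnS => /orP[/eqP->|hr] Ir; first lia.
    exact: HI.
- case: (boolP (I N.+1)) => IN.
    exists (- phi N.+1); split.
    + move=> s; rewrite leq_eqVlt ltnS => /orP[/eqP->|hs] Os.
        by move: (HD _ Os); rewrite IN.
      have := H _ _ (ltnW (hs : (s < N.+1)%N)) (leqnn _) Os IN; lia.
    + move=> r; rewrite leq_eqVlt ltnS => /orP[/eqP->|hr] Ir; first lia.
      have := HI r hr Ir; lia.
  exists T; split.
  + move=> s; rewrite leq_eqVlt ltnS => /orP[/eqP->|hs] Os; first lia.
    exact: HO.
  + move=> r; rewrite leq_eqVlt ltnS => /orP[/eqP->|hr] Ir; first by rewrite Ir in IN.
    exact: HI.
Qed.

Close Scope ring_scope.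

Definition Xi n p q F G b : nat -> nat -> nat -> int :=
  fun i j k => Posz (Xb n p q F G b i j k).

Lemma Xb_indep n p q F G b b' i j k :
  [&& i != p, j != p & k != p] || [&& i != q, j != q & k != q] ->
  Xb n p q F G b i j k = Xb n p q F G b' i j k.
Proof.
rewrite /Xb; case: ifP => // _; case/orP => H; first by rewrite H.
by case: ifP => // _; rewrite H.
Qed.

Lemma OA_indep n p q F G b b' i j k :
  [&& i != p, j != p & k != p] || [&& i != q, j != q & k != q] ->
  OA (Xi n p q F G b) i j k = OA (Xi n p q F G b') i j k.
Proof.
move=> H; rewrite /OA /Xi.
by rewrite !(@Xb_indep _ _ _ _ _ b b') //; move: H; 
  case: (i != p); case: (j != p); case: (k != p);
  case: (i != q); case: (j != q); case: (k != q).
Qed.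

Lemma dX_avoid_p n p q F G b (hp : (p <= n.+1)%N) (FJ : junk n F) (FC : coc n F) a b' c d :
  (a <= n.+1)%N -> (b' <= n.+1)%N -> (c <= n.+1)%N -> (d <= n.+1)%N ->
  a != p -> b' != p -> c != p -> d != p -> dOA (Xi n p q F G b) a b' c d = 0%R.
Proof.
move=> *; apply: (@dOA_all _ (fun v => (v <= n.+1)%N && (v != p))); 
  try (apply/andP; split; assumption).
move=> x y z w h1 h2 h3 /andP[_ hx] /andP[_ hy] /andP[_ hz] /andP[hw hw'].
rewrite dOA_sorted // /Xi.
have := coc_avoid (f := Xb n p q F G b) hp (fun i j k => X_face_p q G b i j k hp FJ) FC
   h1 h2 h3 hw hx hy hz hw'.
lia.
Qed.

Lemma dX_avoid_q n p q F G b (hpq : (p < q)%N) (hq : (q <= n.+1)%N) (GJ : junk n G)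
  (GC : coc n G)
  (comp : forall i j k, G (bump p i) (bump p j) (bump p k) =
                 F (bump q.-1 i) (bump q.-1 j) (bump q.-1 k)) a b' c d :
  (a <= n.+1)%N -> (b' <= n.+1)%N -> (c <= n.+1)%N -> (d <= n.+1)%N ->
  a != q -> b' != q -> c != q -> d != q -> dOA (Xi n p q F G b) a b' c d = 0%R.
Proof.
move=> *; apply: (@dOA_all _ (fun v => (v <= n.+1)%N && (v != q)));
  try (apply/andP; split; assumption).
move=> x y z w h1 h2 h3 /andP[_ hx] /andP[_ hy] /andP[_ hz] /andP[hw hw'].
rewrite dOA_sorted // /Xi.
have := coc_avoid (f := Xb n p q F G b) hq
   (fun i j k => X_face_q b i j k hpq hq GJ comp) GC
   h1 h2 h3 hw hx hy hz hw'.
lia.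
Qed.

Lemma abszK_ge0 (x : int) : (0 <= x)%R -> Posz (absz x) = x.
Proof. by case: x. Qed.
Lemma abszK_le0 (x : int) : (x <= 0)%R -> (- Posz (absz x))%R = x.
Proof. case: x => [[|k]|k] //= _. Qed.

Lemma Xb_pq n p q F G b x y z : (x < y)%N -> (y < z)%N -> (z <= n.+1)%N ->
  [|| p == x, p == y | p == z] -> [|| q == x, q == y | q == z] ->
  Xb n p q F G b x y z = b (x + y + z - p - q)%N.
Proof.
move=> h1 h2 h3 Hp Hq; rewrite /Xb ifT; last by apply/and3P; split.
rewrite ifF; last by apply/negbTE; move: Hp; lia.
by rewrite ifF //; apply/negbTE; move: Hq; lia.
Qed.

Local Open Scope ring_scope.

Lemma SS_nat n p q F G (hn : (0 < n)%N) (hpq : (p < q)%N) (hq : (q <= n.+1)%N)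
  (FJ : junk n F) (FC : coc n F) (GJ : junk n G) (GC : coc n G)
  (comp : forall i j k, G (bump p i) (bump p j) (bump p k) =
                 F (bump q.-1 i) (bump q.-1 j) (bump q.-1 k)) :
  exists b, junk n.+1 (Xb n p q F G b) /\ coc n.+1 (Xb n p q F G b).
Proof.
have hp : (p <= n.+1)%N by lia.
pose r0 := if p == 0%N then (if q == 1%N then 2%N else 1%N) else 0%N.
have [hr0 hr0p hr0q] : [/\ (r0 <= n.+1)%N, r0 != p & r0 != q].
  rewrite /r0; case: eqP => ?; [case: eqP => ?|]; split; lia.
pose X0 := Xi n p q F G (fun _ => 0%N).
pose phi := fun r => OA X0 p r0 r - OA X0 q r0 r.
have phi_diff : forall r s, (r <= n.+1)%N -> (s <= n.+1)%N -> r != p -> r != q ->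
    s != p -> s != q -> phi s - phi r = OA X0 p r s - OA X0 q r s.
  move=> r s hr hs rp rq sp sq.
  have := dX_avoid_q (fun _ => 0%N) hpq hq GJ GC comp hp hr0 hr hs
     (negbT (ltn_eqF hpq)) hr0q rq sq.
  have := dX_avoid_p q G (fun _ => 0%N) hp FJ FC hq hr0 hr hs
     (negbT (gtn_eqF hpq)) hr0p rp sp.
  rewrite /dOA /phi -/X0; lia.
pose O := fun s => [&& s != p, s != q & ((s < p)%N || (q < s)%N)].
pose I := fun r => ((p < r)%N && (r < q)%N).
have HD : forall s, O s -> ~~ I s.
  move=> s /and3P[_ _ H]; rewrite /I; lia.
have HS : forall s r, (s <= n.+1)%N -> (r <= n.+1)%N -> O s -> I r -> phi r <= phi s.
  move=> s r hs hr /and3P[sp sq Os] /andP[pr rq].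
  rewrite -subr_ge0 phi_diff //; try lia.
  case/orP: Os => Os.
  + rewrite (OA_kij X0 (i:=p)) ?(OA_kji X0 (i:=q)) /X0 /Xi; lia.
  + rewrite (OA_ijk X0 (i:=p)) ?(OA_jik X0 (i:=q)) /X0 /Xi; lia.
have [T [HO HI]] := T_exists HD HS.
pose bf := fun r => absz (T + phi r).
have OApqr : forall r, (r <= n.+1)%N -> r != p -> r != q ->
    OA (Xi n p q F G bf) p q r = T + phi r.
  move=> r hr rp rq.
  case: (ltngtP r p) => [rlp|prl|/eqP]; last by rewrite (negbTE rp).
  - rewrite (OA_kij _ (i:=p)); last lia.
    rewrite /Xi Xb_pq; try lia.
    rewrite (_ : (r + p + q - p - q)%N = r); last lia.
    rewrite abszK_ge0 //; apply: HO => //; rewrite /O rp rq /=; lia.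
  case: (ltngtP r q) => [rlq|qlr|/eqP]; last by rewrite (negbTE rq).
  - rewrite (OA_ikj _ (i:=p)); last lia.
    rewrite /Xi Xb_pq; try lia.
    rewrite (_ : (p + r + q - p - q)%N = r); last lia.
    rewrite abszK_le0 //; apply: HI => //; rewrite /I; lia.
  - rewrite (OA_ijk _ (i:=p)); last lia.
    rewrite /Xi Xb_pq; try lia.
    rewrite (_ : (p + q + r - p - q)%N = r); last lia.
    rewrite abszK_ge0 //; apply: HO => //; rewrite /O rp rq /=; lia.
have dXpq : forall r s, (r <= n.+1)%N -> (s <= n.+1)%N -> r != p -> r != q ->
    s != p -> s != q -> dOA (Xi n p q F G bf) p q r s = 0.
  move=> r s hr hs rp rq sp sq.
  rewrite /dOA !OApqr // (@OA_indep _ _ _ _ _ bf (fun _ => 0%N) q r s); last first.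
    by rewrite rp sp (negbT (gtn_eqF hpq)).
  rewrite (@OA_indep _ _ _ _ _ bf (fun _ => 0%N) p r s); last first.
    by rewrite rq sq (negbT (ltn_eqF hpq)) orbT.
  have := phi_diff r s hr hs rp rq sp sq; rewrite -/X0; lia.
exists bf; split.
  by move=> i j k H; rewrite /Xb (negbTE H).
move=> a b c d h1 h2 h3 h4.
case Ap : [&& a != p, b != p, c != p & d != p].
  move/and4P: Ap => [ap bp cp dp].
  exact: (coc_avoid hp (fun i j k => X_face_p q G bf i j k hp FJ) FC h1 h2 h3 h4).
case Aq : [&& a != q, b != q, c != q & d != q].
  move/and4P: Aq => [ap bp cp dp].
  exact: (coc_avoid hq (fun i j k => X_face_q bf i j k hpq hq GJ comp) GC h1 h2 h3 h4).
have hp' : [|| p == a, p == b, p == c | p == d] by move: Ap; lia.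
have hq' : [|| q == a, q == b, q == c | q == d] by move: Aq; lia.
suff : dOA (Xi n p q F G bf) a b c d = 0.
  rewrite dOA_sorted // /Xi; lia.
case/or4P: hp' => /eqP ea; case/or4P: hq' => /eqP eb; try lia;
  rewrite -ea -eb; first [
    rewrite dXpq; lia
  | rewrite d23 dXpq; lia
  | rewrite d34 d23 dXpq; lia
  | rewrite d12 d23 dXpq; lia
  | rewrite d12 d34 d23 dXpq; lia
  | rewrite d23 d12 d34 d23 dXpq; lia ].
Qed.

Close Scope ring_scope.

Theorem SS_K : SS_complex K_nat_2.
Proof.
move=> m p q hpq hq cp cq Hc.
have ep : nat_of_ord (inord p : 'I_m.+2) = p by rewrite inordK //; lia.
have ep' : nat_of_ord (inord p : 'I_m.+3) = p by rewrite inordK //; lia.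
have eq1 : nat_of_ord (inord q.-1 : 'I_m.+2) = q.-1 by rewrite inordK //; lia.
have eq' : nat_of_ord (inord q : 'I_m.+3) = q by rewrite inordK //; lia.
have comp : forall i j k, av cq (bump p i) (bump p j) (bump p k) =
    av cp (bump q.-1 i) (bump q.-1 j) (bump q.-1 k).
  move=> i j k; have := f_equal (fun s => av s i j k) Hc.
  by rewrite /= !av_face ep eq1.
have FJ : junk m.+1 (av cp) by move=> i j k; apply: av_junk.
have GJ : junk m.+1 (av cq) by move=> i j k; apply: av_junk.
have FC : coc m.+1 (av cp) by move=> *; apply: av_coc.
have GC : coc m.+1 (av cq) by move=> *; apply: av_coc.
have [b [XJ XC]] := SS_nat (isT : (0 < m.+1)) hpq hq FJ FC GJ GC comp.
exists (mkS XJ XC); split; apply: S_ext => i j k.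
- by rewrite /= av_face av_mk ep' X_face_p //; lia.
- by rewrite /= av_face av_mk eq' X_face_q.
Qed.

Theorem mainTheorem1 : SS_complex K_nat_2 /\ ~ Kan_complex K_nat_2.
Proof. split; [exact: SS_K | exact: notKan]. Qed.
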